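(* In the case $m=1$ with $\beta_1=l$ (so $\alpha_1+\dots+\alpha_l=l$, $k=l$, $n=l+1$), the regular graph $\mathcal G(\boldsymbol\nu,\boldsymbol\rho)$ satisfies $v_r\ge u_r$ for all $0\le r<l$, and is therefore proper, provided $$\rho_r\ge\frac{\alpha_r+l}{\alpha_{r+1}+l}\quad\text{for } r=1,\dots,l,$$ where $\alpha_{l+1}=\alpha_1$.
   Context: Setting: $l\ge1$, $m=1$, weights $\alpha_1,\dots,\alpha_l\ge0$ with $\alpha_1+\dots+\alpha_l=l=\beta_1$, $\boldsymbol\nu=(\alpha_1,\dots,\alpha_l,-l)$, $\boldsymbol\rho=(\rho_1,\dots,\rho_l)$ with all $\rho_i>1$. Indices of $\alpha,\rho,u,v$ are taken modulo $l$. $\sigma_0=1$, $\sigma_r=\rho_1\cdots\rho_r$ ($1\le r\le l$), $\tau=\rho_1\cdots\rho_l$, $\sigma_{sl+h}=\tau^s\sigma_h$. Points ${\bf a}_r^t=\tau^t\sigma_r(1,u_r)$, ${\bf b}_r^t=\tau^t\sigma_r(1,v_r)$; segments $\mathcal A_r^t=[{\bf a}_r^t,{\bf b}_{r+l}^t]$ and $\mathcal B_r^t=[{\bf b}_r^t,{\bf a}_{r+1}^t]$ ($0\le r<l$, $t\in\mathbb Z$); $u_r,v_r$ are the unique numbers for which each $\mathcal A_r^t$ has slope $\alpha_{r+1}$ and each $\mathcal B_r^t$ has slope $-l$; $\mathcal G(\boldsymbol\nu,\boldsymbol\rho)=\{{\bf 0}\}\cup\bigcup_{t,r}(\mathcal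 A_r^t\cup\mathcal B_r^t)$, the union of graphs of functions $P_1\le\dots\le P_{l+1}$ on $[0,\infty)$. Proper: for each $q>0$ and each $i$ with $P_i(q)<P_{i+1}(q)$, the sum of the slopes of $P_1,\dots,P_i$ immediately to the left of $q$ does not exceed the corresponding sum immediately to the right of $q$. *)

(* Defs.v *)
From mathcomp Require Import all_boot all_order all_algebra.
From mathcomp Require Import all_classical all_reals all_analysis.
Set Implicit Arguments. Unset Strict Implicit. Unset Printing Implicit Defensive.
Import Order.TTheory GRing.Theory Num.Theory.
Import numFieldNormedType.Exports.
Local Open Scope ring_scope.
Local Open Scope classical_set_scope.

Section Graph.
Variable R : realType.
(* l >= 1 ; rho i for i = 1..l ; u r, v r for r = 0..l-1 (used modulo l) *)
Variables (l : nat) (rho : nat -> R) (u v : nat -> R).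

Definition sigma (h : nat) : R := \prod_(1 <= i < h.+1) rho i.
Definition tau : R := sigma l.
(* sigma_{s l + h} = tau^s sigma_h, for every integer index *)
Definition sigmaZ (k : int) : R :=
  tau ^ (k %/ (l%:Z))%Z * sigma `|(k %% (l%:Z))%Z|%N.
Definition modl (k : int) : nat := `|(k %% (l%:Z))%Z|%N.

Definition pa (j : int) : R * R := (sigmaZ j, sigmaZ j * u (modl j)).
Definition pb (j : int) : R * R := (sigmaZ j, sigmaZ j * v (modl j)).

Definition pt_a (r : nat) (t : int) : R * R :=
  (tau ^ t * sigmaZ r%:Z, tau ^ t * sigmaZ r%:Z * u (modl r%:Z)).
Definition pt_b (r : nat) (t : int) : R * R :=
  (tau ^ t * sigmaZ r%:Z, tau ^ t * sigmaZ r%:Z * v (modl r%:Z)).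

Definition slope (p q : R * R) : R := (q.2 - p.2) / (q.1 - p.1).
Definition lineval (p q : R * R) (x : R) : R := p.2 + slope p q * (x - p.1).

(* The segment A_r^t = [a_r^t, b_{r+l}^t] has index j = t l + r and is
   [pa j, pb (j + l)], covering x in [sigma_j, sigma_{j+l}];
   B_r^t = [b_r^t, a_{r+1}^t] is [pb j, pa (j+1)], covering [sigma_j, sigma_{j+1}].
   For sigma_k <= x < sigma_{k+1}, the segments of G above x (counted with
   multiplicity) are the A-segments of index k-l+1, ..., k and the B-segment
   of index k.  [seg_vals k x] lists their heights at x. *)
Definition seg_vals (k : int) (x : R) : seq R :=
  [seq lineval (pa (k - i%:Z)) (pb (k - i%:Z + l%:Z)) x | i <- iota 0 l]
  ++ [:: lineval (pb k) (pa (k + 1)) x].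

(* P_1 <= ... <= P_{l+1} (P : nat -> R -> R, indices 1..l+1) are the functions
   whose graphs make up G: P_i(0) = 0 and, for x > 0, (P_1 x, ..., P_{l+1} x)
   is the increasingly sorted list of the heights of the segments above x. *)
Definition profile (P : nat -> R -> R) : Prop :=
  (forall i, (1 <= i <= l.+1)%N -> P i 0 = 0) /\
  forall (x : R) (k : int), 0 < x -> sigmaZ k <= x < sigmaZ (k + 1) ->
    perm_eq [seq P i x | i <- iota 1 l.+1] (seg_vals k x) /\
    sorted <=%R [seq P i x | i <- iota 1 l.+1].

Definition left_slope (f : R -> R) (q s : R) : Prop :=
  (fun h : R => (f q - f (q - h)) / h) @ 0^'+ --> s.
Definition right_slope (f : R -> R) (q s : R) : Prop :=
  (fun h : R => (f (q + h) - f q) / h) @ 0^'+ --> s.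

Definition proper_graph : Prop :=
  exists P : nat -> R -> R, profile P /\
    forall (q : R) (i : nat), 0 < q -> (1 <= i <= l)%N -> P i q < P i.+1 q ->
      exists sL sR : nat -> R,
        (forall j, (1 <= j <= i)%N ->
           left_slope (P j) q (sL j) /\ right_slope (P j) q (sR j)) /\
        \sum_(1 <= j < i.+1) sL j <= \sum_(1 <= j < i.+1) sR j.
End Graph.

(* Main.v *)
Require Import Defs.
From mathcomp Require Import all_boot all_order all_algebra.
From mathcomp Require Import all_classical all_reals all_analysis.
From mathcomp Require Import ring lra zify.
Import Order.TTheory GRing.Theory Num.Theory.
Import numFieldNormedType.Exports.
Local Open Scope ring_scope.
Local Open Scope classical_set_scope.

Section Lex.
Variable R : realType.
Implicit Types (p q : R * R) (W : seq (R * R)).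

Definition lexle p q : bool := (p.1 < q.1) || ((p.1 == q.1) && (p.2 <= q.2)).

Lemma lexle_total : total lexle.
Proof.
move=> p q; rewrite /lexle.
case: (ltgtP p.1 q.1) => //= _; exact: le_total.
Qed.

Lemma lexle_trans : transitive lexle.
Proof.
move=> q p r; rewrite /lexle.
case/orP=> [h1|/andP[/eqP e1 h1]]; case/orP=> [h2|/andP[/eqP e2 h2]].
- by rewrite (lt_trans h1 h2).
- by rewrite -e2 h1.
- by rewrite e1 h2.
- by rewrite e1 e2 eqxx (le_trans h1 h2) orbT.
Qed.

Lemma lexle_fst p q : lexle p q -> p.1 <= q.1.
Proof. by case/orP=> [/ltW|/andP[/eqP-> _]]. Qed.

Definition fH (h : R) p := p.1 + p.2 * h.

Lemma sort_at0 W : sort <=%R (map fst W) = map fst (sort lexle W).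
Proof.
apply: (sorted_eq le_trans le_anti); first exact: (sort_sorted le_total).
  rewrite sorted_map; apply: sub_sorted (sort_sorted lexle_total W).
  by move=> p q /lexle_fst.
by rewrite perm_sort perm_map // perm_sym perm_sort.
Qed.

Lemma near_all_seq (T : eqType) (s : seq T) (F : set_system R) (FF : Filter F)
  (Q : T -> R -> Prop) :
  (forall x, x \in s -> \forall h \near F, Q x h) ->
  \forall h \near F, forall x, x \in s -> Q x h.
Proof.
elim: s => [|a s IH] H.
  by apply: nearW => h x; rewrite in_nil.
have Ha := H a (mem_head _ _).
have Hs := IH (fun x xs => H x (mem_behead (s := a :: s) xs)).
near=> h => x; rewrite in_cons.
case/orP=> [/eqP->|xs]; [near: h; exact: Ha | move: x xs; near: h; exact: Hs].
Unshelve. all: by end_near.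
Qed.

Lemma pair_near p q : lexle p q -> \forall h \near 0^'+, fH h p <= fH h q.
Proof.
case/orP=> [lt1|/andP[/eqP e1 le2]]; last first.
  near=> h; rewrite /fH e1 lerD2l; apply: ler_wpM2r le2.
  by apply: ltW; near: h; exact: nbhs_right_gt.
set K := `|p.2| + `|q.2| + 1.
have K0 : 0 < K by rewrite /K ltr_wpDl // addr_ge0.
have e0 : 0 < (q.1 - p.1) / K by rewrite divr_gt0 // subr_gt0.
near=> h.
have h0 : 0 < h by near: h; exact: nbhs_right_gt.
have he : h < (q.1 - p.1) / K by near: h; exact: nbhs_right_lt.
have Kh : K * h < q.1 - p.1 by rewrite mulrC -ltr_pdivlMr.
have a1 : p.2 <= `|p.2| by exact: ler_norm.
have a2 : - q.2 <= `|q.2| by rewrite -normrN ler_norm.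
rewrite /fH; move: Kh; rewrite /K => Kh; nra.
Unshelve. all: by end_near.
Qed.

Lemma sort_near W : \forall h \near 0^'+,
  sort <=%R (map (fH h) W) = map (fH h) (sort lexle W).
Proof.
have : \forall h \near 0^'+, forall p, p \in W -> forall q, q \in W -> lexle p q -> fH h p <= fH h q.
  apply: near_all_seq => p pW.
  apply: near_all_seq => q qW.
  case pq: (lexle p q); last by apply: nearW.
  near=> h => _; near: h; exact: pair_near.
apply: filterS => h Hh.
apply: (sorted_eq le_trans le_anti); first exact: (sort_sorted le_total).
  rewrite sorted_map.
  apply: (sub_in_sorted (P := mem W)) (sort_sorted lexle_total W).
    by move=> p q pW qW /= pq; exact: Hh.
  by apply/allP => p; rewrite mem_sort.
by rewrite perm_sort perm_map // perm_sym perm_sort.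
Unshelve. all: by end_near.
Qed.

Lemma sum_take W i : (0 < i < size W)%N ->
  (nth (0,0) (sort lexle W) i.-1).1 < (nth (0,0) (sort lexle W) i).1 ->
  \sum_(j < i) (nth (0,0) (sort lexle W) j).2 =
  \sum_(p <- W | p.1 <= (nth (0,0) (sort lexle W) i.-1).1) p.2.
Proof.
move=> /andP[i0 iW]; set S := sort lexle W => gap.
set th := (nth (0,0) S i.-1).1.
have sS : size S = size W by rewrite size_sort.
have srt : sorted <=%R (map fst S) by rewrite -sort_at0; exact: (sort_sorted le_total).
have mono : forall a b, (a <= b)%N -> (b < size W)%N ->
    (nth (0,0) S a).1 <= (nth (0,0) S b).1.
  move=> a b ab bW.
  have aW : (a < size W)%N by exact: leq_ltn_trans ab bW.
  rewrite -!(nth_map (0,0) 0 fst) ?sS //.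
  by apply: (sorted_leq_nth le_trans lexx) => //; rewrite inE size_map sS.
rewrite (perm_big S) /=; last by rewrite perm_sym perm_sort.
rewrite (big_nth (0,0)) sS (big_cat_nat _ (n:=i)) //=; last exact: ltnW.
rewrite [X in _ + X]big1_seq ?addr0; last first.
  move=> j /andP[Hj]; rewrite mem_index_iota => /andP[ij jW].
  have := mono _ _ ij jW; move: Hj; rewrite /th => Hj Hij.
  by have := lt_le_trans gap Hij; rewrite ltNge Hj.
rewrite big_mkord; symmetry; apply: eq_bigl => j /=.
rewrite /th mono //; first by rewrite -ltnS prednK.
by apply: ltn_trans iW; rewrite prednK.
Qed.
End Lex.
Arguments lexle {R}.
Arguments fH {R}.
Section Sig.
Variable R : realType.
Variables (l : nat) (rho : nat -> R).
Hypothesis l0 : (0 < l)%N.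
Hypothesis rho1 : forall i, (1 <= i <= l)%N -> 1 < rho i.

Local Notation sigma := (sigma rho).
Local Notation tau := (tau l rho).
Local Notation sigmaZ := (sigmaZ l rho).
Local Notation modl := (modl l).

Lemma sigmaS h : sigma h.+1 = sigma h * rho h.+1.
Proof. by rewrite /Defs.sigma big_nat_recr. Qed.


Lemma sigma_0 : sigma 0 = 1.
Proof. by rewrite /Defs.sigma big_geq. Qed.

Lemma sigma_ge1 h : (h <= l)%N -> 1 <= sigma h.
Proof.
elim: h => [|h IH] hl; first by rewrite sigma_0.
rewrite sigmaS; have s1 := IH (ltnW hl); have r1 := @rho1 h.+1; rewrite hl in r1.
have {}r1 := r1 isT.
rewrite -[1]mulr1; apply: ler_pM => //; exact: ltW.
Qed.

Lemma sigma_gt0 h : (h <= l)%N -> 0 < sigma h.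
Proof. move=> hl; have := sigma_ge1 _ hl; lra. Qed.

Lemma tau_gt1 : 1 < tau.
Proof.
rewrite /Defs.tau -(prednK l0) sigmaS prednK //.
have s1 := sigma_ge1 _ (leq_pred l); have r1 := @rho1 l; rewrite l0 leqnn in r1.
have := r1 isT; nra.
Qed.

Lemma tau_gt0 : 0 < tau.
Proof. exact: lt_trans tau_gt1. Qed.

Lemma tau_unit : tau \is a GRing.unit.
Proof. by rewrite unitfE gt_eqF // tau_gt0. Qed.

Lemma lZ0 : (l%:Z != 0).
Proof. by rewrite eqz_nat -lt0n. Qed.

Lemma divl_dec (s : int) (r : nat) : (r < l)%N -> ((s * l%:Z + r%:Z) %/ l%:Z)%Z = s.
Proof.
move=> rl; rewrite divzMDl ?lZ0 // divz_small ?addr0 //.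
Qed.

Lemma modl_dec (s : int) (r : nat) : (r < l)%N -> modl (s * l%:Z + r%:Z) = r.
Proof.
move=> rl; rewrite /Defs.modl modzMDl modz_small //.
Qed.

Lemma sigmaZ_dec (s : int) (r : nat) : (r < l)%N ->
  sigmaZ (s * l%:Z + r%:Z) = tau ^ s * sigma r.
Proof.
move=> rl; rewrite /Defs.sigmaZ divl_dec //.
by have := modl_dec s r rl; rewrite /Defs.modl => ->.
Qed.

Lemma decomp (k : int) : exists s r, (r < l)%N /\ k = s * l%:Z + r%:Z.
Proof.
exists (k %/ l%:Z)%Z, (modl k); split.
  rewrite /Defs.modl -ltz_nat gez0_abs ?modz_ge0 ?lZ0 //.
  by rewrite ltz_pmod // ltz_nat.
by rewrite /Defs.modl gez0_abs ?modz_ge0 ?lZ0 // -divz_eq.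
Qed.

Lemma modl_lt k : (modl k < l)%N.
Proof. by have [s [r [rl ->]]] := decomp k; rewrite modl_dec. Qed.

Lemma sigmaZ_gt0 k : 0 < sigmaZ k.
Proof.
have [s [r [rl ->]]] := decomp k; rewrite sigmaZ_dec //.
by rewrite mulr_gt0 ?exprz_gt0 ?tau_gt0 // sigma_gt0 // ltnW.
Qed.

Lemma sigmaZS k : sigmaZ (k + 1) = sigmaZ k * rho (modl k).+1.
Proof.
have [s [r [rl ->]]] := decomp k; rewrite modl_dec // sigmaZ_dec //.
case: (ltngtP r.+1 l) => [rl1|rl1|rl1].
- have -> : s * l%:Z + r%:Z + 1 = s * l%:Z + (r.+1)%:Z by rewrite -addn1 PoszD; ring.
  by rewrite sigmaZ_dec // sigmaS; ring.
- by move: rl1; rewrite ltnNge rl.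
have -> : s * l%:Z + r%:Z + 1 = (s + 1) * l%:Z + 0%N%:Z.
  by rewrite -rl1 -addn1 PoszD; ring.
rewrite sigmaZ_dec // exprzDr ?tau_unit // expr1z sigma_0 /Defs.tau -rl1 sigmaS.
ring.
Qed.

Lemma sigmaZ_ltS k : sigmaZ k < sigmaZ (k + 1).
Proof.
rewrite sigmaZS -[X in X < _]mulr1 ltr_pM2l ?sigmaZ_gt0 //.
by apply: rho1; have := modl_lt k; rewrite ltnS => ->.
Qed.

Lemma sigmaZ_le_add k (n : nat) : sigmaZ k <= sigmaZ (k + n%:Z).
Proof.
elim: n => [|n IH]; first by rewrite addr0.
apply: le_trans IH _; rewrite -addn1 PoszD addrA; exact/ltW/sigmaZ_ltS.
Qed.

Lemma sigmaZ_le k k' : k <= k' -> sigmaZ k <= sigmaZ k'.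
Proof.
move=> kk; have -> : k' = k + (`|k' - k|%N)%:Z by rewrite gez0_abs ?subr_ge0 //; ring.
exact: sigmaZ_le_add.
Qed.



Lemma interval_uniq k k' x : sigmaZ k <= x < sigmaZ (k + 1) ->
  sigmaZ k' <= x < sigmaZ (k' + 1) -> k = k'.
Proof.
move=> /andP[a1 a2] /andP[b1 b2].
case: (ltgtP k k') => // kk.
- have := sigmaZ_le (k + 1) k'; rewrite lezD1 kk => /(_ isT) h.
  by have := lt_le_trans a2 (le_trans h b1); rewrite ltxx.
- have := sigmaZ_le (k' + 1) k; rewrite lezD1 kk => /(_ isT) h.
  by have := lt_le_trans b2 (le_trans h a1); rewrite ltxx.
Qed.

Lemma tau_pow_ge (n : nat) : 1 + n%:R * (tau - 1) <= tau ^+ n.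
Proof.
elim: n => [|n IH]; first by rewrite mul0r addr0 expr0.
rewrite exprS -natr1; have t1 := tau_gt1.
have h1 : tau * (1 + n%:R * (tau - 1)) <= tau * tau ^+ n.
  by rewrite ler_wpM2l // ltW // (lt_trans ltr01).
have h2 : 0 <= n%:R * ((tau - 1) * (tau - 1)) by rewrite mulr_ge0 // mulr_ge0 // subr_ge0 ltW.
nra.
Qed.

Lemma tau_big y : exists n : nat, y < tau ^+ n.
Proof.
have t1 := tau_gt1.
have h0 : 0 <= `|y| / (tau - 1) by rewrite divr_ge0 // subr_ge0 ltW.
have := archi_boundP h0; set N := Num.Def.archi_bound _ => HN.
exists N; apply: lt_le_trans (tau_pow_ge N).
move: HN; rewrite ltr_pdivrMr ?subr_gt0 // => HN.
have := ler_norm y; lra.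
Qed.

Lemma exists_k x : 0 < x -> exists k, sigmaZ k <= x < sigmaZ (k + 1).
Proof.
move=> x0; have [n1 H1] := tau_big x; have [n2 H2] := tau_big x^-1.
set k0 : int := (- n2%:Z) * l%:Z + 0%N%:Z.
pose P := fun n : nat => sigmaZ (k0 + n%:Z) <= x.
have P0 : P 0%N.
  rewrite /P addr0 sigmaZ_dec // sigma_0 mulr1 -invr_expz -exprnP.
  have tn : 0 < tau ^+ n2 by rewrite exprn_gt0 // tau_gt0.
  rewrite -[x^-1]mul1r ltr_pdivrMr // in H2.
  rewrite -[_^-1]mul1r ler_pdivrMr //; apply: ltW; by rewrite mulrC.
have ub : forall n, P n -> (n <= (n1 + n2) * l)%N.
  move=> n; rewrite /P; apply: contraTT; rewrite -ltnNge => Hn.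
  rewrite -ltNge; apply: lt_le_trans H1 _.
  have -> : tau ^+ n1 = sigmaZ (n1%:Z * l%:Z + 0%N%:Z) by rewrite sigmaZ_dec // sigma_0 mulr1 exprnP.
  apply: sigmaZ_le; rewrite /k0 addr0 addr0.
  have : ((n1 + n2) * l)%:Z <= n%:Z by rewrite lez_nat ltnW.
  rewrite PoszM PoszD; lia.
have [i Pi imax] := ex_maxnP (ex_intro _ 0%N P0) ub.
exists (k0 + i%:Z); apply/andP; split; first exact: Pi.
rewrite ltNge; apply/negP => Pi1.
have : P i.+1 by rewrite /P -addn1 PoszD addrA.
by move/imax; rewrite ltnn.
Qed.

Lemma sigmaZ_shift (s k : int) : sigmaZ (s * l%:Z + k) = tau ^ s * sigmaZ k.
Proof.
have [s' [r [rl ->]]] := decomp k.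
have -> : s * l%:Z + (s' * l%:Z + r%:Z) = (s + s') * l%:Z + r%:Z by ring.
by rewrite !sigmaZ_dec // exprzDr ?tau_unit // mulrA.
Qed.

Lemma modl_shift (s k : int) : modl (s * l%:Z + k) = modl k.
Proof.
have [s' [r [rl ->]]] := decomp k.
have -> : s * l%:Z + (s' * l%:Z + r%:Z) = (s + s') * l%:Z + r%:Z by ring.
by rewrite !modl_dec.
Qed.

Lemma sigmaZ_nat r : (r < l)%N -> sigmaZ r%:Z = sigma r.
Proof.
move=> rl; have := sigmaZ_dec 0 r rl; rewrite mul0r add0r expr0z mul1r; exact.
Qed.

Lemma modl_nat r : (r < l)%N -> modl r%:Z = r.
Proof. move=> rl; have := modl_dec 0 r rl; rewrite mul0r add0r; exact. Qed.
End Sig.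

Section Graph.
Variable R : realType.
Variables (l : nat) (rho u v : nat -> R).
Hypothesis l0 : (0 < l)%N.
Hypothesis rho1 : forall i, (1 <= i <= l)%N -> 1 < rho i.
Local Notation sigmaZ := (sigmaZ l rho).
Local Notation pa := (pa l rho u).
Local Notation pb := (pb l rho v).
Hypothesis HA : forall j : int, slope (pa (j - l%:Z)) (pb j) = slope (pa j) (pb (j + l%:Z)).
Hypothesis HAge : forall j : int, - l%:R <= slope (pa j) (pb (j + l%:Z)).
Hypothesis HB : forall j : int, slope (pb j) (pa (j + 1)) = - l%:R.
Hypothesis Huv : forall j : int, (pa j).2 <= (pb j).2.

Definition Aseg (j : int) := (pa j, pb (j + l%:Z)).
Definition Bseg (j : int) := (pb j, pa (j + 1)).
Definition segs (k : int) := [seq Aseg (k - i%:Z) | i <- iota 0 l] ++ [:: Bseg k].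
Definition lv (pp : (R * R) * (R * R)) x := lineval pp.1 pp.2 x.
Definition sl (pp : (R * R) * (R * R)) := slope pp.1 pp.2.

Lemma seg_vals_segs k x : seg_vals l rho u v k x = map (lv ^~ x) (segs k).
Proof. by rewrite /seg_vals /segs map_cat -map_comp. Qed.

Lemma size_segs k : size (segs k) = l.+1.
Proof. by rewrite size_cat size_map size_iota addn1. Qed.

Lemma lv_shift pp x h : lv pp (x + h) = lv pp x + sl pp * h.
Proof. rewrite /lv /sl /lineval; ring. Qed.

Lemma lv_start (p q : R * R) : lineval p q p.1 = p.2.
Proof. by rewrite /lineval subrr mulr0 addr0. Qed.

Lemma lv_end (p q : R * R) : p.1 != q.1 -> lineval p q q.1 = q.2.
Proof.
move=> pq; rewrite /lineval /slope mulfVK ?subr_eq0 1?eq_sym //; ring.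
Qed.

Lemma segs_split k :
  segs (k - 1) = [seq Aseg (k - 1 - i%:Z) | i <- iota 0 l.-1] ++ [:: Aseg (k - l%:Z); Bseg (k - 1)] /\
  segs k = Aseg k :: [seq Aseg (k - 1 - i%:Z) | i <- iota 0 l.-1] ++ [:: Bseg k].
Proof.
rewrite /segs; split.
  have -> : iota 0 l = rcons (iota 0 l.-1) l.-1.
    by rewrite -{1}(prednK l0) -addn1 iotaD cats1.
  rewrite map_rcons -cats1 -catA /=.
  congr (_ ++ _); congr (Aseg _ :: _); lia.
have -> : iota 0 l = 0%N :: [seq (1 + i)%N | i <- iota 0 l.-1].
  by rewrite -iotaDl -[in LHS](prednK l0).
rewrite /= subr0 -map_comp; congr (_ :: _ ++ _).
by apply: eq_map => i /=; congr Aseg; lia.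
Qed.

Lemma sltS k : sigmaZ k < sigmaZ (k + 1).
Proof. by apply: sigmaZ_ltS; auto. Qed.
Lemma sle k k' : k <= k' -> sigmaZ k <= sigmaZ k'.
Proof. by apply: sigmaZ_le; auto. Qed.

Lemma vals_cont k : perm_eq (seg_vals l rho u v k (sigmaZ k)) (seg_vals l rho u v (k - 1) (sigmaZ k)).
Proof.
have [e1 e2] := segs_split k.
rewrite !seg_vals_segs e1 e2 /= map_cat /=.
have -> : lv (Aseg k) (sigmaZ k) = (pa k).2 by rewrite /lv lv_start.
have -> : lv (Bseg k) (sigmaZ k) = (pb k).2 by rewrite /lv lv_start.
rewrite !map_cat /=.
have -> : lv (Aseg (k - l%:Z)) (sigmaZ k) = (pb k).2.
  have h1 := sltS (k - 1); rewrite subrK in h1.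
  have h2 : sigmaZ (k - l%:Z) <= sigmaZ (k - 1) by apply: sle; lia.
  rewrite /lv /Aseg /= subrK lv_end //= lt_eqF //; exact: le_lt_trans h2 h1.
have -> : lv (Bseg (k - 1)) (sigmaZ k) = (pa k).2.
  rewrite /lv /Bseg /= subrK lv_end //= lt_eqF //.
  by have := sltS (k - 1); rewrite subrK.
by rewrite -cat1s perm_catC -catA.
Qed.

Lemma sum_jump k (th : R) :
  \sum_(pp <- segs (k - 1) | lv pp (sigmaZ k) <= th) sl pp <=
  \sum_(pp <- segs k | lv pp (sigmaZ k) <= th) sl pp.
Proof.
have [e1 e2] := segs_split k.
rewrite e1 e2 big_cons !big_cat !big_cons !big_nil /=.
have -> : lv (Aseg k) (sigmaZ k) = (pa k).2 by rewrite /lv lv_start.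
have -> : lv (Bseg k) (sigmaZ k) = (pb k).2 by rewrite /lv lv_start.
have -> : lv (Aseg (k - l%:Z)) (sigmaZ k) = (pb k).2.
  have h1 := sltS (k - 1); rewrite subrK in h1.
  have h2 : sigmaZ (k - l%:Z) <= sigmaZ (k - 1) by apply: sle; lia.
  rewrite /lv /Aseg /= subrK lv_end //= lt_eqF //; exact: le_lt_trans h2 h1.
have -> : lv (Bseg (k - 1)) (sigmaZ k) = (pa k).2.
  rewrite /lv /Bseg /= subrK lv_end //= lt_eqF //.
  by have := sltS (k - 1); rewrite subrK.
have -> : sl (Aseg (k - l%:Z)) = sl (Aseg k) by rewrite /sl /Aseg /= subrK HA.
have -> : sl (Bseg (k - 1)) = - l%:R by rewrite /sl /Bseg HB.
have -> : sl (Bseg k) = - l%:R by rewrite /sl /Bseg HB.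
have hA : - l%:R <= sl (Aseg k) by exact: HAge.
have huv := Huv k.
case: ifP => ha; case: ifP => hb; rewrite ?addr0 ?add0r; try lra.
Qed.

Lemma sgt0 k : 0 < sigmaZ k.
Proof. exact: (@sigmaZ_gt0 R l rho l0 rho1). Qed.

Definition kk (x : R) : int := xget 0 [set k | sigmaZ k <= x < sigmaZ (k + 1)].

Lemma kk_eq x k : sigmaZ k <= x < sigmaZ (k + 1) -> kk x = k.
Proof.
move=> H; have /= H' := xgetPex (P := [set k | sigmaZ k <= x < sigmaZ (k + 1)]) 0 (ex_intro _ k H).
exact: (@interval_uniq R l rho l0 rho1 _ _ x H' H).
Qed.

Definition Pf (j : nat) (x : R) : R :=
  if 0 < x then nth 0 (sort <=%R (seg_vals l rho u v (kk x) x)) j.-1 else 0.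

Lemma Pf_list x k : 0 < x -> sigmaZ k <= x < sigmaZ (k + 1) ->
  [seq Pf i x | i <- iota 1 l.+1] = sort <=%R (seg_vals l rho u v k x).
Proof.
move=> x0 Hk; rewrite /Pf x0 (kk_eq _ _ Hk).
set S := sort _ _.
have sS : size S = l.+1 by rewrite size_sort seg_vals_segs size_map size_segs.
rewrite -[in RHS](mkseq_nth 0 S) sS /mkseq -[1%N]/(1 + 0)%N iotaDl -map_comp.
by apply: eq_map => i.
Qed.

Lemma profile_Pf : profile l rho u v Pf.
Proof.
split; first by move=> i _; rewrite /Pf ltxx.
move=> x k x0 Hk; rewrite (Pf_list _ _ x0 Hk); split; first by rewrite perm_sort.
exact: (sort_sorted le_total).
Qed.

Lemma right_near k q : sigmaZ k <= q < sigmaZ (k + 1) ->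
  \forall h \near (0:R)^'+, sigmaZ k <= q + h < sigmaZ (k + 1) /\ 0 < q + h.
Proof.
move=> /andP[a b]; have q0 : 0 < q := lt_le_trans (sgt0 k) a.
near=> h.
have h0 : 0 < h by near: h; exact: nbhs_right_gt.
have h1 : h < sigmaZ (k + 1) - q by near: h; apply: nbhs_right_lt; rewrite subr_gt0.
split; [apply/andP; split|]; lra.
Unshelve. all: by end_near.
Qed.

Lemma left_data k q : sigmaZ k <= q < sigmaZ (k + 1) -> exists kL,
  (\forall h \near (0:R)^'+, sigmaZ kL <= q - h < sigmaZ (kL + 1) /\ 0 < q - h) /\
  perm_eq (seg_vals l rho u v k q) (seg_vals l rho u v kL q) /\
  forall th, \sum_(pp <- segs kL | lv pp q <= th) sl pp <=
             \sum_(pp <- segs k | lv pp q <= th) sl pp.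
Proof.
move=> /andP[a b]; have q0 : 0 < q := lt_le_trans (sgt0 k) a.
case: (eqVneq q (sigmaZ k)) => [qe|qne].
- exists (k - 1); split; last split.
  + have s1 := sltS (k - 1); rewrite subrK in s1.
    near=> h.
    have h0 : 0 < h by near: h; exact: nbhs_right_gt.
    have h1 : h < q - sigmaZ (k - 1) by near: h; apply: nbhs_right_lt; rewrite subr_gt0 qe.
    have h2 : h < q by near: h; exact: nbhs_right_lt.
    rewrite subrK; split; [apply/andP; split|]; lra.
  + rewrite qe; exact: vals_cont.
  + move=> th; rewrite qe; exact: sum_jump.
- have lt : sigmaZ k < q by rewrite lt_neqAle eq_sym qne a.
  exists k; split; last by split=> // th.
  near=> h.
  have h0 : 0 < h by near: h; exact: nbhs_right_gt.
  have h1 : h < q - sigmaZ k by near: h; apply: nbhs_right_lt; rewrite subr_gt0.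
  have h2 : h < q by near: h; exact: nbhs_right_lt.
  split; [apply/andP; split|]; lra.
Unshelve. all: by end_near.
Qed.

Lemma proper_Pf : proper_graph l rho u v.
Proof.
exists Pf; split; first exact: profile_Pf.
move=> q i q0 /andP[i1 il] gap.
have [k Hk] := @exists_k R l rho l0 rho1 q q0.
have [kL [nearL [permL sumL]]] := left_data _ _ Hk.
set WR := [seq (lv pp q, sl pp) | pp <- segs k].
set WL := [seq (lv pp q, - sl pp) | pp <- segs kL].
set SR := sort lexle WR.
set SL := sort lexle WL.
have szR : size SR = l.+1 by rewrite size_sort size_map size_segs.
have szL : size SL = l.+1 by rewrite size_sort size_map size_segs.
have PqR : forall j, (1 <= j <= l.+1)%N -> Pf j q = (nth (0,0) SR j.-1).1.
  move=> j hj; rewrite /Pf q0 (kk_eq _ _ Hk) seg_vals_segs.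
  have -> : map (lv ^~ q) (segs k) = map fst WR by rewrite -map_comp.
  rewrite sort_at0 (nth_map (0,0)) // szR; lia.
have PqL : forall j, (1 <= j <= l.+1)%N -> Pf j q = (nth (0,0) SL j.-1).1.
  move=> j hj; rewrite /Pf q0 (kk_eq _ _ Hk).
  have -> : sort <=%R (seg_vals l rho u v k q) = sort <=%R (seg_vals l rho u v kL q).
    exact/perm_sort_leP.
  rewrite seg_vals_segs.
  have -> : map (lv ^~ q) (segs kL) = map fst WL by rewrite -map_comp.
  rewrite sort_at0 (nth_map (0,0)) // szL; lia.
have nR : \forall h \near (0:R)^'+, forall j, (1 <= j <= l.+1)%N ->
    Pf j (q + h) = fH h (nth (0,0) SR j.-1).
  near=> h => j hj.
  have [hk hpos] : sigmaZ k <= q + h < sigmaZ (k + 1) /\ 0 < q + h.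
    by near: h; exact: (right_near _ _ Hk).
  rewrite /Pf hpos (kk_eq _ _ hk) seg_vals_segs.
  have -> : map (lv ^~ (q + h)) (segs k) = map (fH h) WR.
    by rewrite -map_comp; apply: eq_map => pp; rewrite /= lv_shift.
  have -> : sort <=%R (map (fH h) WR) = map (fH h) SR by near: h; exact: sort_near.
  by rewrite (nth_map (0,0)) // szR; lia.
have nL : \forall h \near (0:R)^'+, forall j, (1 <= j <= l.+1)%N ->
    Pf j (q - h) = fH h (nth (0,0) SL j.-1).
  near=> h => j hj.
  have [hk hpos] : sigmaZ kL <= q - h < sigmaZ (kL + 1) /\ 0 < q - h.
    by near: h; exact: nearL.
  rewrite /Pf hpos (kk_eq _ _ hk) seg_vals_segs.
  have -> : map (lv ^~ (q - h)) (segs kL) = map (fH h) WL.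
    by rewrite -map_comp; apply: eq_map => pp; rewrite /= lv_shift /fH /=; ring.
  have -> : sort <=%R (map (fH h) WL) = map (fH h) SL by near: h; exact: sort_near.
  by rewrite (nth_map (0,0)) // szL; lia.
exists (fun j => - (nth (0,0) SL j.-1).2), (fun j => (nth (0,0) SR j.-1).2).
split.
  move=> j /andP[j1 ji]; have hj : (1 <= j <= l.+1)%N by lia.
  split.
    rewrite /left_slope; apply: cvg_near_cst; near=> h.
    have h0 : 0 < h by near: h; exact: nbhs_right_gt.
    have E : Pf j (q - h) = fH h (nth (0,0) SL j.-1) by move: j hj {j1 ji}; near: h; exact: nL.
    rewrite E (PqL j hj) /fH; field; exact: lt0r_neq0.
  rewrite /right_slope; apply: cvg_near_cst; near=> h.
  have h0 : 0 < h by near: h; exact: nbhs_right_gt.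
  have E : Pf j (q + h) = fH h (nth (0,0) SR j.-1) by move: j hj {j1 ji}; near: h; exact: nR.
  rewrite E (PqR j hj) /fH; field; exact: lt0r_neq0.
have hi : (1 <= i <= l.+1)%N by lia.
have hi1 : (1 <= i.+1 <= l.+1)%N by lia.
have gR : (nth (0,0) SR i.-1).1 < (nth (0,0) SR i).1 by move: gap; rewrite (PqR _ hi) (PqR _ hi1).
have gL : (nth (0,0) SL i.-1).1 < (nth (0,0) SL i).1 by move: gap; rewrite (PqL _ hi) (PqL _ hi1).
have thE : (nth (0,0) SL i.-1).1 = (nth (0,0) SR i.-1).1 by rewrite -PqL // -PqR.
have sWL : (0 < i < size WL)%N by rewrite size_map size_segs; lia.
have sWR : (0 < i < size WR)%N by rewrite size_map size_segs; lia.
rewrite !big_add1 /= !big_mkord sumrN (@sum_take R WL i sWL gL) (@sum_take R WR i sWR gR).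
rewrite thE !big_map /= sumrN opprK; exact: sumL.
Unshelve. all: try by end_near.
Qed.
End Graph.

Section Main.
Variable R : realType.
Variables (l : nat) (alpha rho u v : nat -> R).
Hypothesis l0 : (0 < l)%N.
Hypothesis a0 : forall i, (1 <= i <= l)%N -> 0 <= alpha i.
Hypothesis rho1 : forall i, (1 <= i <= l)%N -> 1 < rho i.
Hypothesis HA0 : forall (r : nat) (t : int), (r < l)%N ->
     slope (pt_a l rho u r t) (pt_b l rho v (r + l) t) = alpha r.+1.
Hypothesis HB0 : forall (r : nat) (t : int), (r < l)%N ->
     slope (pt_b l rho v r t) (pt_a l rho u r.+1 t) = - l%:R.
Hypothesis Hc : forall r, (1 <= r <= l)%N ->
     (alpha r + l%:R) / (alpha (r %% l).+1 + l%:R) <= rho r.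

Local Notation sigmaZ := (sigmaZ l rho).
Local Notation modl := (modl l).
Local Notation tau := (tau l rho).
Local Notation sigma := (sigma rho).
Local Notation pa := (pa l rho u).
Local Notation pb := (pb l rho v).

Lemma pa_pt (s : int) (n : nat) : pa (s * l%:Z + n%:Z) = pt_a l rho u n s.
Proof. by rewrite /Defs.pa /pt_a sigmaZ_shift ?modl_shift. Qed.

Lemma pb_pt (s : int) (n : nat) : pb (s * l%:Z + n%:Z) = pt_b l rho v n s.
Proof. by rewrite /Defs.pb /pt_b sigmaZ_shift ?modl_shift. Qed.

Lemma slopeA j : slope (pa j) (pb (j + l%:Z)) = alpha (modl j).+1.
Proof.
have [s [r [rl ->]]] := decomp _ l0 j.
rewrite -addrA -PoszD pa_pt pb_pt HA0 // modl_shift ?modl_nat //.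
Qed.

Lemma slopeB j : slope (pb j) (pa (j + 1)) = - l%:R.
Proof.
have [s [r [rl ->]]] := decomp _ l0 j.
by rewrite -addrA -[1]/(1%N%:Z) -PoszD pa_pt pb_pt addn1 HB0.
Qed.

Lemma sig_pos r : (r < l)%N -> 0 < sigma r.
Proof. by move=> rl; exact: (@sigma_gt0 R l rho rho1 r (ltnW rl)). Qed.

Lemma slope_eq (p q : R * R) a : p.1 != q.1 -> slope p q = a -> q.2 - p.2 = a * (q.1 - p.1).
Proof. by move=> ne <-; rewrite /slope divfK // subr_eq0 eq_sym. Qed.

Lemma tgt1 : 1 < tau.
Proof. exact: (@tau_gt1 R l rho l0 rho1). Qed.

Lemma eqA r : (r < l)%N -> tau * v r - u r = alpha r.+1 * (tau - 1).
Proof.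
move=> rl; have := slopeA r%:Z; rewrite modl_nat //.
have sp := sig_pos r rl; have t1 := tgt1.
have hpa : pa r%:Z = (sigma r, sigma r * u r) by rewrite /Defs.pa sigmaZ_nat ?modl_nat.
have hpb : pb (r%:Z + l%:Z) = (tau * sigma r, tau * sigma r * v r).
  have -> : r%:Z + l%:Z = 1 * l%:Z + r%:Z by ring.
  by rewrite /Defs.pb sigmaZ_shift ?modl_shift ?expr1z ?sigmaZ_nat ?modl_nat.
rewrite hpa hpb => /slope_eq /= H.
have {H} H : tau * sigma r * v r - sigma r * u r = alpha r.+1 * (tau * sigma r - sigma r).
  by apply: H; rewrite lt_eqF // ltr_pMl.
have sne : sigma r != 0 by rewrite gt_eqF.
apply: (mulfI sne); transitivity (tau * sigma r * v r - sigma r * u r); first ring.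
rewrite H; ring.
Qed.

Definition nx (r : nat) : nat := modl (r%:Z + 1).

Lemma nx_eq r : nx r = (r.+1 %% l)%N.
Proof. by rewrite /nx /Defs.modl -[1]/(1%N%:Z) -PoszD addn1 modz_nat absz_nat. Qed.

Lemma nx_lt r : (nx r < l)%N.
Proof. exact: modl_lt. Qed.

Lemma eqB r : (r < l)%N -> rho r.+1 * u (nx r) - v r = - l%:R * (rho r.+1 - 1).
Proof.
move=> rl; have := slopeB r%:Z.
have sp := sig_pos r rl.
have r1 : 1 < rho r.+1 by apply: rho1; rewrite ltnS rl.
have hpb : pb r%:Z = (sigma r, sigma r * v r) by rewrite /Defs.pb sigmaZ_nat ?modl_nat.
have hpa : pa (r%:Z + 1) = (sigma r * rho r.+1, sigma r * rho r.+1 * u (nx r)).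
  by rewrite /Defs.pa sigmaZS // sigmaZ_nat // (@modl_nat l r rl).
rewrite hpa hpb => /slope_eq /= H.
have {H} H : sigma r * rho r.+1 * u (nx r) - sigma r * v r = - l%:R * (sigma r * rho r.+1 - sigma r).
  by apply: H; rewrite lt_eqF // ltr_pMr.
have sne : sigma r != 0 by rewrite gt_eqF.
apply: (mulfI sne); transitivity (sigma r * rho r.+1 * u (nx r) - sigma r * v r); first ring.
rewrite H; ring.
Qed.

Definition z r := v r - alpha r.+1.

Lemma zrec r : (r < l)%N -> z r = rho r.+1 * tau * z (nx r) +
   (rho r.+1 * (alpha (nx r).+1 + l%:R) - (alpha r.+1 + l%:R)).
Proof.
move=> rl; have B := eqB r rl; have A := eqA (nx r) (nx_lt r).
have Bv : v r = rho r.+1 * u (nx r) + l%:R * (rho r.+1 - 1).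
  by rewrite -[v r]opprK -[- v r](addKr (rho r.+1 * u (nx r))) B; ring.
have Au : u (nx r) = tau * v (nx r) - alpha (nx r).+1 * (tau - 1).
  by rewrite -A; ring.
rewrite /z Bv Au; ring.
Qed.

Lemma cpos r : (r < l)%N -> 0 <= rho r.+1 * (alpha (nx r).+1 + l%:R) - (alpha r.+1 + l%:R).
Proof.
move=> rl; have := Hc r.+1; rewrite ltnS rl -nx_eq => /(_ isT).
have ap : 0 < alpha (nx r).+1 + l%:R.
  have := a0 (nx r).+1; rewrite ltnS nx_lt => /(_ isT) h.
  have : 0 < l%:R :> R by rewrite ltr0n.
  lra.
by rewrite ler_pdivrMr // subr_ge0 mulrC.
Qed.

Lemma exists_max (f : nat -> R) n : (0 < n)%N ->
  exists r, (r < n)%N /\ forall r', (r' < n)%N -> f r' <= f r.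
Proof.
elim: n => // n IH _; case: n IH => [|n] IH.
  by exists 0%N; split=> // r'; rewrite ltnS leqn0 => /eqP->.
have [r [rn H]] := IH isT.
case: (leP (f r) (f n.+1)) => h.
  exists n.+1; split=> // r'; rewrite ltnS leq_eqVlt => /orP[/eqP->//|lt].
  exact: le_trans (H _ lt) h.
exists r; split; first by apply: ltn_trans rn _.
move=> r'; rewrite ltnS leq_eqVlt => /orP[/eqP->|lt]; first exact: ltW.
exact: H.
Qed.

Lemma part1 r : (r < l)%N -> u r <= v r.
Proof.
move=> rl.
have [m [ml Hm]] := exists_max z l l0.
pose p := if m == 0%N then l.-1 else m.-1.
have pl : (p < l)%N by rewrite /p; case: ifP => _; lia.
have np : nx p = m.
  rewrite nx_eq /p; case: ifP => [/eqP->|/negbT m0].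
    by rewrite prednK // modnn.
  by rewrite prednK ?lt0n // modn_small.
have zm : z m <= 0.
  have E := zrec p pl; rewrite np in E.
  have c0 := cpos p pl; rewrite np in c0.
  have r1 : 1 < rho p.+1 by apply: rho1; rewrite ltnS pl.
  have t1 := tgt1.
  have rt : 1 < rho p.+1 * tau by nra.
  have := Hm p pl.
  rewrite leNgt; apply: contraLR; rewrite -ltNge => zp.
  rewrite E; nra.
have zr : v r <= alpha r.+1 by have := le_trans (Hm r rl) zm; rewrite /z; lra.
have A := eqA r rl; have t1 := tgt1.
nra.
Qed.

Lemma HA j : slope (pa (j - l%:Z)) (pb j) = slope (pa j) (pb (j + l%:Z)).
Proof.
rewrite -{2}(subrK l%:Z j) !slopeA; congr (alpha _.+1).
by rewrite -[j - l%:Z](addrC (- l%:Z)) -mulN1r modl_shift.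
Qed.

Lemma HAge j : - l%:R <= slope (pa j) (pb (j + l%:Z)).
Proof.
rewrite slopeA; have := a0 (modl j).+1; rewrite ltnS modl_lt // => /(_ isT).
have : 0 <= l%:R :> R by [].
lra.
Qed.

Lemma Huv j : (pa j).2 <= (pb j).2.
Proof.
rewrite /Defs.pa /Defs.pb /=; apply: ler_wpM2l.
  exact/ltW/(@sigmaZ_gt0 R l rho l0 rho1).
by apply: part1; exact: modl_lt.
Qed.
End Main.

Local Close Scope classical_set_scope.

Theorem mainTheorem5 (R : realType) (l : nat) (alpha rho u v : nat -> R) :
  (0 < l)%N ->
  (forall i, (1 <= i <= l)%N -> 0 <= alpha i) ->
  \sum_(1 <= i < l.+1) alpha i = l%:R ->
  (forall i, (1 <= i <= l)%N -> 1 < rho i) ->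
  (forall (r : nat) (t : int), (r < l)%N ->
     slope (pt_a l rho u r t) (pt_b l rho v (r + l) t) = alpha r.+1) ->
  (forall (r : nat) (t : int), (r < l)%N ->
     slope (pt_b l rho v r t) (pt_a l rho u r.+1 t) = - l%:R) ->
  (forall r, (1 <= r <= l)%N ->
     (alpha r + l%:R) / (alpha (r %% l).+1 + l%:R) <= rho r) ->
  (forall r, (r < l)%N -> u r <= v r) /\ proper_graph l rho u v.
Proof.
move=> l0 a0 _ rho1 HA0 HB0 Hc; split.
  exact: (@part1 R l alpha rho u v l0 a0 rho1 HA0 HB0 Hc).
apply: proper_Pf => //.
- exact: (@HA R l alpha rho u v l0 rho1 HA0).
- exact: (@HAge R l alpha rho u v l0 a0 rho1 HA0).
- exact: (@slopeB R l rho u v l0 rho1 HB0).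
- exact: (@Huv R l alpha rho u v l0 a0 rho1 HA0 HB0 Hc).
Qed.
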